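(* Let $P\in(0,1)$ and $h(x)=P^{1/(1+x)}$ for $x\ge0$. Then $h$ is increasing on $[0,\infty)$ and $$h''(x)\ge-\frac{(\sqrt3-3)^4\,e^{\sqrt3-3}}{\sqrt3\,(\ln P)^2}\qquad\text{for all }x\ge0.$$ Consequently, for $K\ge1$, $\mu_1,\dots,\mu_K>0$ and $P_1,\dots,P_K\in(0,1)$, the function $f(\boldsymbol x)=\sum_{k=1}^K\mu_kP_k^{1/(1+x_k)}$ on $\mathbb{R}_+^K$ satisfies, for every $\boldsymbol x_0\in\mathbb{R}_+^K$, $f(\boldsymbol x)\ge\zeta(\boldsymbol x|\boldsymbol x_0)$ for all $\boldsymbol x\in\mathbb{R}_+^K$ with equality at $\boldsymbol x=\boldsymbol x_0$, where $$\zeta(\boldsymbol x|\boldsymbol x_0)=\sum_{k=1}^K\mu_k\Big(P_k^{1/(1+x_{0,k})}-\frac{P_k^{1/(1+x_{0,k})}\ln P_k}{(1+x_{0,k})^2}(x_k-x_{0,k})-\frac{(\sqrt3-3)^4e^{\sqrt3-3}}{2\sqrt3(\ln P_k)^2}(x_k-x_{0,k})^2\Big),$$ which is a concave function of $\boldsymbol x$.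
   Context: $\mathbb{R}_+=[0,\infty)$; $P_k$ plays the role of the false-alarm probability on subcarrier $k$ and $P_k^{1/(1+x_k)}$ is the detection probability at SINR $x_k$. *)

(* Defs.v *)
From Stdlib Require Import Reals Lra.
From Coquelicot Require Import Coquelicot.
Open Scope R_scope.

Definition hdet (P x : R) : R := Rpower P (/ (1 + x)).

Definition ccurv : R := (sqrt 3 - 3) ^ 4 * exp (sqrt 3 - 3) / sqrt 3.

(* finite sum over k = 0 .. K-1 (K >= 1 is assumed where used) *)
Definition sumK (K : nat) (g : nat -> R) : R := sum_n g (pred K).

(* f(x) = sum_k mu_k P_k^(1/(1+x_k)) ; vectors in R^K are nat -> R, only indices < K matter *)
Definition fobj (K : nat) (mu P x : nat -> R) : R :=
  sumK K (fun k => mu k * hdet (P k) (x k)).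

Definition zeta (K : nat) (mu P x0 x : nat -> R) : R :=
  sumK K (fun k => mu k *
    (hdet (P k) (x0 k)
     - hdet (P k) (x0 k) * ln (P k) / (1 + x0 k) ^ 2 * (x k - x0 k)
     - ccurv / (2 * (ln (P k)) ^ 2) * (x k - x0 k) ^ 2)).

Definition nonnegK (K : nat) (x : nat -> R) : Prop := forall k, (k < K)%nat -> 0 <= x k.

(* Main.v *)
Require Import Defs.
From Stdlib Require Import Reals Lra Psatz.
From Coquelicot Require Import Coquelicot.
Open Scope R_scope.

Lemma sum_le (f g : nat -> R) n : (forall k, (k <= n)%nat -> g k <= f k) -> sum_n g n <= sum_n f n.
Proof.
  induction n as [|n IH]; intros H.
  - rewrite !sum_O; apply H; lia.
  - rewrite !sum_Sn. unfold plus; simpl.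
    apply Rplus_le_compat; [apply IH; intros; apply H; lia | apply H; lia].
Qed.

Lemma sum_lin (f g : nat -> R) a b n : sum_n (fun k => a * f k + b * g k) n = a * sum_n f n + b * sum_n g n.
Proof.
  induction n as [|n IH].
  - rewrite !sum_O; simpl; ring.
  - rewrite !sum_Sn. unfold plus; simpl. rewrite IH. ring.
Qed.

Lemma mono (f df : R -> R) a b : a <= b ->
  (forall z, a <= z <= b -> is_derive f z (df z)) ->
  (forall z, a <= z <= b -> 0 <= df z) -> f a <= f b.
Proof.
  intros Hab Hd Hp.
  destruct (MVT_gen f a b df) as [c [Hc Heq]].
  - intros z Hz. rewrite Rmin_left in Hz by lra. rewrite Rmax_right in Hz by lra. apply Hd; lra.
  - intros z Hz. rewrite Rmin_left in Hz by lra. rewrite Rmax_right in Hz by lra.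
    apply continuity_pt_filterlim. apply (@ex_derive_continuous R_AbsRing R_NormedModule). eexists. apply Hd; lra.
  - rewrite Rmin_left in Hc by lra. rewrite Rmax_right in Hc by lra.
    assert (0 <= df c * (b - a)) by (apply Rmult_le_pos; [apply Hp; lra| lra]). lra.
Qed.

Definition g (s : R) := exp s * (s^4 + 2 * s^3).
Definition dg (s : R) := exp s * (s^2 * (s^2 + 6*s + 6)).

Lemma g_der s : is_derive g s (dg s).
Proof. unfold g, dg. auto_derive; [auto|]. ring. Qed.

Lemma sqrt3_facts : sqrt 3 * sqrt 3 = 3 /\ 1 < sqrt 3 < 2.
Proof.
  split. apply sqrt_sqrt; lra.
  split.
  - rewrite <- sqrt_1. apply sqrt_lt_1; lra.
  - assert (sqrt 4 = 2). { replace 4 with (2*2) by ring. apply sqrt_square; lra. }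
    rewrite <- H. apply sqrt_lt_1; lra.
Qed.

Lemma gmin_val : g (sqrt 3 - 3) = - ((sqrt 3 - 3) ^ 4 * exp (sqrt 3 - 3) / sqrt 3).
Proof.
  destruct sqrt3_facts as [H [H1 H2]]. unfold g.
  field_simplify; [|lra]. 
  apply Rminus_diag_uniq. field_simplify; [|lra].
  replace ((sqrt 3)^5) with (sqrt 3 * sqrt 3 * (sqrt 3 * sqrt 3) * sqrt 3) by ring.
  replace ((sqrt 3)^4) with (sqrt 3 * sqrt 3 * (sqrt 3 * sqrt 3)) by ring.
  replace ((sqrt 3)^3) with (sqrt 3 * sqrt 3 * sqrt 3) by ring.
  replace ((sqrt 3)^2) with (sqrt 3 * sqrt 3) by ring.
  rewrite H. field. lra.
Qed.

Lemma g_bound s : s < 0 -> g (sqrt 3 - 3) <= g s.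
Proof.
  intros Hs. destruct sqrt3_facts as [H [H1 H2]].
  assert (Hneg : g (sqrt 3 - 3) <= 0).
  { rewrite gmin_val. assert (0 < (sqrt 3 - 3)^4 * exp (sqrt 3 - 3) / sqrt 3).
    { replace ((sqrt 3-3)^4) with ((3-sqrt 3)^4) by ring. apply Rdiv_lt_0_compat; [apply Rmult_lt_0_compat; [apply pow_lt; lra| apply exp_pos]|lra]. }
    lra. }
  destruct (Rle_lt_dec s (-2)) as [Hs2|Hs2].
  - assert (0 <= g s).
    { unfold g. apply Rmult_le_pos; [left; apply exp_pos|].
      replace (s^4 + 2*s^3) with ((s*s) * (s * (s+2))) by ring.
      apply Rmult_le_pos; [nra|nra]. }
    lra.
  - destruct (Rle_lt_dec s (sqrt 3 - 3)) as [Hs3|Hs3].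
    + assert (- g s <= - g (sqrt 3 - 3)).
      { apply (mono (fun z => - g z) (fun z => - dg z)); [lra| intros z Hz; apply (is_derive_opp g); apply g_der |].
        intros z Hz; unfold dg.
        assert (0 <= exp z * (z^2 * -(z^2+6*z+6))). { apply Rmult_le_pos; [left; apply exp_pos| apply Rmult_le_pos; nra]. }
        lra. }
      lra.
    + apply (mono g dg); [lra| intros; apply g_der|].
      intros z Hz; unfold dg. apply Rmult_le_pos; [left; apply exp_pos| apply Rmult_le_pos; nra].
Qed.

Definition f1 L y := exp (/(1+y) * L) * (- (L / (1+y)^2)).
Definition f2 L y := g (L / (1+y)) / L^2.

Lemma hder P y : 0 < 1 + y -> is_derive (hdet P) y (f1 (ln P) y).
Proof. intros Hy. unfold hdet, Rpower, f1. auto_derive; [lra|]. field. lra. Qed.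

Lemma h1der L y : L <> 0 -> 0 < 1 + y -> is_derive (f1 L) y (f2 L y).
Proof. intros HL Hy. unfold f1, f2, g. auto_derive; [repeat split; nra|].
  replace (L / (1+y)) with (/(1+y) * L) by (field; lra). field. lra. Qed.

Lemma f2_bound L y : L < 0 -> 0 < 1 + y -> f2 L y >= - ccurv / L^2.
Proof.
  intros HL Hy. unfold f2.
  assert (Hs : L / (1+y) < 0) by (apply Rdiv_neg_pos; lra).
  pose proof (g_bound _ Hs) as Hb. rewrite gmin_val in Hb. fold ccurv in Hb.
  assert (HL2 : 0 < L^2) by (simpl; nra).
  unfold Rdiv. apply Rle_ge. apply Rmult_le_compat_r; [left; apply Rinv_0_lt_compat; lra| exact Hb].
Qed.

Lemma loc_pos x : 0 <= x -> locally x (fun t => 0 < 1 + t).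
Proof.
  intros Hx. exists (mkposreal 1 Rlt_0_1). intros t Ht.
  unfold ball in Ht; simpl in Ht; unfold AbsRing_ball, abs, minus, plus, opp in Ht; simpl in Ht.
  apply Rabs_def2 in Ht. lra.
Qed.

Lemma Dn P x : 0 < P < 1 -> 0 <= x ->
  ex_derive_n (hdet P) 2 x /\ Derive_n (hdet P) 2 x = f2 (ln P) x.
Proof.
  intros HP Hx.
  assert (HL : ln P < 0) by (rewrite <- ln_1; apply ln_increasing; lra).
  assert (Hloc : locally x (fun t => f1 (ln P) t = Derive_n (hdet P) 1 t)).
  { eapply filter_imp; [|apply (loc_pos x Hx)]. intros t Ht. simpl.
    symmetry; apply is_derive_unique; apply hder; lra. }
  split.
  - simpl. apply (ex_derive_ext_loc (f1 (ln P))). exact Hloc.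
    eexists. apply h1der; lra.
  - simpl. rewrite <- (Derive_ext_loc (f1 (ln P))). apply is_derive_unique, h1der; lra.
    exact Hloc.
Qed.

Lemma taylor P x x0 : 0 < P < 1 -> 0 <= x -> 0 <= x0 ->
  hdet P x >= hdet P x0 + f1 (ln P) x0 * (x - x0) - ccurv / (2 * (ln P)^2) * (x - x0)^2.
Proof.
  intros HP Hx Hx0.
  assert (HL : ln P < 0) by (rewrite <- ln_1; apply ln_increasing; lra).
  set (L := ln P) in *.
  set (M := ccurv / L^2).
  set (c1 := f1 L x0).
  set (psi := fun z => f1 L z - c1 + M * (z - x0)).
  set (phi := fun z => hdet P z - hdet P x0 - c1 * (z - x0) + M / 2 * (z - x0)^2).
  assert (Hpsi : forall z, 0 < 1 + z -> is_derive psi z (f2 L z + M)).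
  { intros z Hz. unfold psi, f2, f1, g. auto_derive; [repeat split; nra|].
    replace (L / (1+z)) with (/(1+z) * L) by (field; lra). field. lra. }
  assert (Hphi : forall z, 0 < 1 + z -> is_derive phi z (psi z)).
  { intros z Hz. unfold phi, psi, hdet, Rpower, f1. fold L. auto_derive; [lra|]. field. lra. }
  assert (Hd2 : forall z, 0 <= z -> 0 <= f2 L z + M).
  { intros z Hz. pose proof (f2_bound L z HL ltac:(lra)). replace (- ccurv / L^2) with (- M) in H by (unfold M; field; nra). lra. }
  assert (Hpsi0 : psi x0 = 0) by (unfold psi, c1; ring).
  assert (Hphi0 : phi x0 = 0) by (unfold phi; ring).
  assert (phi x >= 0).
  { destruct (Rle_lt_dec x0 x) as [Hle|Hlt].
    - apply Rle_ge. rewrite <- Hphi0. apply (mono phi psi); [lra| intros; apply Hphi; lra|].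
      intros z Hz. rewrite <- Hpsi0. apply (mono psi (fun z => f2 L z + M)); [lra| intros; apply Hpsi; lra|].
      intros; apply Hd2; lra.
    - assert (- phi x <= - phi x0).
      { apply (mono (fun z => - phi z) (fun z => - psi z)); [lra| intros; apply (is_derive_opp phi); apply Hphi; lra|].
        intros z Hz. assert (psi z <= psi x0).
        { apply (mono psi (fun z => f2 L z + M)); [lra| intros; apply Hpsi; lra|]. intros; apply Hd2; lra. }
        lra. }
      lra. }
  unfold phi, M in H. unfold Rdiv in *. 
  replace (ccurv * / (2 * L^2)) with (ccurv * / L^2 * / 2) by (field; lra). lra.
Qed.

Lemma ccurv_nonneg : 0 <= ccurv.
Proof.
  unfold ccurv. destruct sqrt3_facts as [H [H1 H2]].
  replace ((sqrt 3 - 3)^4) with (((sqrt 3 - 3)^2)^2) by ring.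
  unfold Rdiv. apply Rmult_le_pos; [apply Rmult_le_pos; [apply pow2_ge_0| left; apply exp_pos]| left; apply Rinv_0_lt_compat; lra].
Qed.

Theorem mainTheorem7 :
  (forall P : R, 0 < P < 1 ->
     (forall x y : R, 0 <= x -> x < y -> hdet P x < hdet P y) /\
     (forall x : R, 0 <= x ->
        ex_derive_n (hdet P) 2 x /\
        Derive_n (hdet P) 2 x >= - ccurv / (ln P) ^ 2)) /\
  (forall (K : nat) (mu P x0 : nat -> R),
     (1 <= K)%nat ->
     (forall k, (k < K)%nat -> 0 < mu k /\ 0 < P k < 1) ->
     nonnegK K x0 ->
     (forall x, nonnegK K x -> fobj K mu P x >= zeta K mu P x0 x) /\
     fobj K mu P x0 = zeta K mu P x0 x0 /\
     (forall (x y : nat -> R) (t : R), nonnegK K x -> nonnegK K y -> 0 <= t <= 1 ->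
        zeta K mu P x0 (fun k => t * x k + (1 - t) * y k)
        >= t * zeta K mu P x0 x + (1 - t) * zeta K mu P x0 y)).
Proof.
  split.
  - intros P HP.
    assert (HL : ln P < 0) by (rewrite <- ln_1; apply ln_increasing; lra).
    split.
    + intros x y Hx Hxy. unfold hdet, Rpower. apply exp_increasing.
      assert (/ (1 + y) < / (1 + x)) by (apply Rinv_lt_contravar; nra).
      nra.
    + intros x Hx. destruct (Dn P x HP Hx) as [H1 H2]. split; [exact H1|].
      rewrite H2. apply f2_bound; lra.
  - intros K mu P x0 HK Hk Hx0.
    assert (Hk' : forall k, (k <= pred K)%nat -> 0 < mu k /\ 0 < P k < 1 /\ 0 <= x0 k).
    { intros k Hkk. assert (k < K)%nat by lia. destruct (Hk k H). split; [|split]; auto. }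
    split; [|split].
    + intros x Hx. unfold fobj, zeta, sumK. apply Rle_ge, sum_le. intros k Hkk.
      destruct (Hk' k Hkk) as [Hmu [HP Hx0k]].
      assert (Hxk : 0 <= x k) by (apply Hx; lia).
      apply Rmult_le_compat_l; [lra|].
      pose proof (taylor (P k) (x k) (x0 k) HP Hxk Hx0k) as T. unfold f1 in T. apply Rge_le in T.
      eapply Rle_trans; [|exact T]. right. assert (ln (P k) < 0) by (rewrite <- ln_1; apply ln_increasing; lra). unfold hdet, Rpower. field; repeat split; lra.
    + unfold fobj, zeta, sumK. apply sum_n_ext. intros k. simpl. ring.
    + intros x y t Hx Hy Ht. unfold zeta, sumK. rewrite <- sum_lin. apply Rle_ge, sum_le.
      intros k Hkk. destruct (Hk' k Hkk) as [Hmu [HP Hx0k]].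
      assert (HL : ln (P k) < 0) by (rewrite <- ln_1; apply ln_increasing; lra).
      set (C := ccurv / (2 * ln (P k) ^ 2)).
      assert (HC : 0 <= C).
      { unfold C. unfold Rdiv. apply Rmult_le_pos; [apply ccurv_nonneg| left; apply Rinv_0_lt_compat]. simpl; nra. }
      set (B := hdet (P k) (x0 k) * ln (P k) / (1 + x0 k) ^ 2).
      set (h := hdet (P k) (x0 k)).
      match goal with |- ?a <= ?b => assert (b - a = mu k * C * (t * (1 - t)) * (x k - y k)^2) by (unfold B, h; ring) end.
      assert (0 <= mu k * C * (t * (1 - t)) * (x k - y k)^2).
      { apply Rmult_le_pos; [apply Rmult_le_pos; [apply Rmult_le_pos; lra| nra]| apply pow2_ge_0]. }
      lra.
Qed.
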